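(* Let $a>\log M+3$. Suppose that: (a) $X$ is distributed as the uniform mixture of $M$ unit-variance Gaussians on $\mathbb{R}$ with true centers $\mu_1^*,\dots,\mu_M^*$, all lying in $(-\infty,-10a)\cup(a,+\infty)$, with at least one true center in $(a,3a)$; (b) the current centers $\mu_1,\dots,\mu_M\in\mathbb{R}$ are such that for every true center $\mu_j^*\in(-\infty,-10a)$ there exists $j'$ with $|\mu_{j'}-\mu_j^*|\le|\mu_j^*|/6$. Then for every $i\in[M]$ with $\mu_i\in[0,4a]$, we have $\mathbb{E}[w_i(X)X]\ge0$.
   Context: Dimension $d=1$. The uniform mixture with true centers $\mu_1^*,\dots,\mu_M^*$ has density $\frac1M\sum_j\frac{1}{\sqrt{2\pi}}e^{-(x-\mu_j^* )^2/2}$. For current centers $\mu_1,\dots,\mu_M$, the membership weights are $$w_i(x)=\frac{e^{-(x-\mu_i)^2/2}}{\sum_{j=1}^M e^{-(x-\mu_j)^2/2}}.$$ *)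

(* Defs.v *)
From Stdlib Require Import Reals Lra.
Open Scope R_scope.

Fixpoint sumR (n : nat) (f : nat -> R) : R :=
  match n with
  | O => 0
  | S k => sumR k f + f k
  end.

Definition gauss (x : R) : R := exp (- (x ^ 2) / 2) / sqrt (2 * PI).

Definition mixture_density (M : nat) (mustar : nat -> R) (x : R) : R :=
  / INR M * sumR M (fun j => gauss (x - mustar j)).

Definition weight (M : nat) (mu : nat -> R) (i : nat) (x : R) : R :=
  exp (- ((x - mu i) ^ 2) / 2) / sumR M (fun j => exp (- ((x - mu j) ^ 2) / 2)).

Definition improper_integral_R (f : R -> R) (L : R) : Prop :=
  forall eps : R, eps > 0 ->
  exists T0 : R, forall a b : R, a <= - T0 -> T0 <= b ->
    exists pr : Riemann_integrable f a b, Rabs (RiemannInt pr - L) < eps.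

Definition mixture_expectation_is (M : nat) (mustar : nat -> R) (g : R -> R) (L : R) : Prop :=
  improper_integral_R (fun x => g x * mixture_density M mustar x) L.

(* Main.v *)
Require Import Defs.
From Stdlib Require Import Reals.
Open Scope R_scope.
From Stdlib Require Import Lra Psatz Classical.
From Coquelicot Require Import Coquelicot.
Open Scope R_scope.


Lemma sumR_ext n f g : (forall j, (j < n)%nat -> f j = g j) -> sumR n f = sumR n g.
Proof. induction n; simpl; intros H; auto. rewrite IHn; [rewrite H|]; auto; intros; apply H; lia. Qed.

Lemma sumR_le n f g : (forall j, (j < n)%nat -> f j <= g j) -> sumR n f <= sumR n g.
Proof. induction n; simpl; intros H; [lra|]. assert (f n <= g n) by (apply H; lia).
 assert (sumR n f <= sumR n g) by (apply IHn; intros; apply H; lia). lra. Qed.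

Lemma sumR_scal n c f : sumR n (fun j => c * f j) = c * sumR n f.
Proof. induction n; simpl; [ring|]. rewrite IHn; ring. Qed.

Lemma sumR_const n c : sumR n (fun _ => c) = INR n * c.
Proof. induction n; simpl sumR; [simpl; ring|]. rewrite IHn, S_INR; ring. Qed.

Lemma sumR_nonneg n f : (forall j, (j < n)%nat -> 0 <= f j) -> 0 <= sumR n f.
Proof. intros H. rewrite <- (Rmult_0_r (INR n)), <- sumR_const. apply sumR_le; auto. Qed.

Lemma sumR_ge_term n f k : (forall j, (j < n)%nat -> 0 <= f j) -> (k < n)%nat -> f k <= sumR n f.
Proof. induction n; intros H Hk; [lia|]. simpl.
 assert (0 <= sumR n f) by (apply sumR_nonneg; intros; apply H; lia).
 destruct (Nat.eq_dec k n). subst; lra.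
 assert (f k <= sumR n f) by (apply IHn; [intros; apply H; lia| lia]).
 assert (0 <= f n) by (apply H; lia). lra. Qed.

Lemma ex_derive_sumR n (F : nat -> R -> R) x :
  (forall j, ex_derive (F j) x) -> ex_derive (fun y => sumR n (fun j => F j y)) x.
Proof. intros H; induction n; simpl.
 - apply ex_derive_const.
 - apply (ex_derive_plus (fun y => sumR n (fun j => F j y)) (F n)); auto. Qed.

Lemma ex_RInt_sumR n (F : nat -> R -> R) a b :
  (forall j, ex_RInt (F j) a b) -> ex_RInt (fun y => sumR n (fun j => F j y)) a b /\
   RInt (fun y => sumR n (fun j => F j y)) a b = sumR n (fun j => RInt (F j) a b).
Proof. intros H; induction n; simpl.
 - split. apply ex_RInt_const. rewrite RInt_const. unfold scal; simpl. unfold mult; simpl. ring.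
 - destruct IHn as [H1 H2]. split.
   + apply (ex_RInt_plus (fun y => sumR n (fun j => F j y)) (F n)); auto.
   + rewrite (RInt_plus (fun y => sumR n (fun j => F j y)) (F n)); auto. rewrite H2. reflexivity.
Qed.

Lemma exp_le_exp x y : x <= y -> exp x <= exp y.
Proof. intros [H|H]. left; apply exp_increasing; auto. subst; lra. Qed.


Definition ee (mu : nat -> R) k x := exp (- ((x - mu k) ^ 2) / 2).
Definition SS M mu x := sumR M (fun j => ee mu j x).

Lemma ee_pos mu k x : 0 < ee mu k x. Proof. apply exp_pos. Qed.
Lemma ee_le1 mu k x : ee mu k x <= 1.
Proof. unfold ee. rewrite <- exp_0. apply exp_le_exp. assert (0 <= (x - mu k)^2) by (apply pow2_ge_0). lra. Qed.

Lemma SS_ge M mu k x : (k < M)%nat -> ee mu k x <= SS M mu x.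
Proof. intros; unfold SS; apply (sumR_ge_term M (fun j => ee mu j x)); auto. intros; left; apply ee_pos. Qed.
Lemma SS_le M mu x : SS M mu x <= INR M.
Proof. unfold SS. rewrite <- (Rmult_1_r (INR M)), <- sumR_const. apply sumR_le. intros; apply ee_le1. Qed.

Lemma weight_eq M mu i x : weight M mu i x = ee mu i x / SS M mu x.
Proof. reflexivity. Qed.

Lemma weight_pos M mu i x : (i < M)%nat -> 0 < weight M mu i x.
Proof. intros H. rewrite weight_eq. assert (h:=SS_ge M mu i x H). assert (h2 := ee_pos mu i x).
 apply Rdiv_lt_0_compat; lra. Qed.

Lemma weight_le1 M mu i x : (i < M)%nat -> weight M mu i x <= 1.
Proof. intros H. rewrite weight_eq. assert (h:=SS_ge M mu i x H). assert (h2 := ee_pos mu i x).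
 apply Rmult_le_reg_r with (SS M mu x). lra. unfold Rdiv. rewrite Rmult_assoc, Rinv_l; lra. Qed.

Lemma weight_ge M mu i x : (i < M)%nat -> ee mu i x / INR M <= weight M mu i x.
Proof. intros H. rewrite weight_eq. assert (h:=SS_ge M mu i x H). assert (h2 := ee_pos mu i x).
 assert (h3 := SS_le M mu x). unfold Rdiv. apply Rmult_le_compat_l. lra.
 apply Rinv_le_contravar; lra. Qed.

Lemma weight_le_ratio M mu i j x : (i < M)%nat -> (j < M)%nat ->
  weight M mu i x <= ee mu i x / ee mu j x.
Proof. intros H Hj. rewrite weight_eq. assert (h:=SS_ge M mu j x Hj). assert (h2 := ee_pos mu i x).
 assert (h4 := ee_pos mu j x).
 unfold Rdiv. apply Rmult_le_compat_l. lra. apply Rinv_le_contravar; lra. Qed.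

Lemma term_cmp (mu : nat -> R) i k x y : x <= y -> y <= 1 -> 0 <= mu i ->
  ee mu k y * ee mu i x <= exp (1/2) * ee mu i y * ee mu i x + ee mu k x * ee mu i y.
Proof. intros Hxy Hy Hu. unfold ee. rewrite <- !exp_plus.
 assert (0 < exp (- (x - mu k) ^ 2 / 2 + - (y - mu i) ^ 2 / 2)) by apply exp_pos.
 assert (0 < exp (1 / 2 + - (y - mu i) ^ 2 / 2 + - (x - mu i) ^ 2 / 2)) by apply exp_pos.
 destruct (Rle_dec (mu k) (mu i)).
 - assert (exp (- (y - mu k) ^ 2 / 2 + - (x - mu i) ^ 2 / 2) <= exp (- (x - mu k) ^ 2 / 2 + - (y - mu i) ^ 2 / 2)).
   { apply exp_le_exp. assert (0 <= (y-x)*(mu i - mu k)) by (apply Rmult_le_pos; lra). nra. } lra.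
 - assert (exp (- (y - mu k) ^ 2 / 2 + - (x - mu i) ^ 2 / 2) <= exp (1 / 2 + - (y - mu i) ^ 2 / 2 + - (x - mu i) ^ 2 / 2)).
   { apply exp_le_exp. assert (0 <= (1 - (y - mu i))*(mu k - mu i)) by (apply Rmult_le_pos; lra).
     assert (0 <= (mu k - mu i - 1)^2) by apply pow2_ge_0. nra. } lra.
Qed.

Lemma weight_cmp M mu i x y : (i < M)%nat -> x <= y -> y <= 1 -> 0 <= mu i ->
  weight M mu i x <= (INR M * exp (1/2) + 1) * weight M mu i y.
Proof. intros Hi Hxy Hy Hu. rewrite !weight_eq.
 assert (hx:=SS_ge M mu i x Hi). assert (hy:=SS_ge M mu i y Hi).
 assert (px := ee_pos mu i x). assert (py := ee_pos mu i y).
 assert (key : SS M mu y * ee mu i x <= INR M * exp (1/2) * ee mu i y * ee mu i x + SS M mu x * ee mu i y).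
 { unfold SS. generalize M. induction M0; simpl sumR. simpl INR. lra.
   rewrite S_INR. assert (h:=term_cmp mu i M0 x y Hxy Hy Hu). nra. }
 assert (0 < exp (1/2)) by apply exp_pos. assert (0 <= INR M) by apply pos_INR.
 assert (k2 : ee mu i x * SS M mu y <= (INR M * exp (1/2) + 1) * ee mu i y * SS M mu x).
 { assert (INR M * exp (1/2) * ee mu i y * ee mu i x <= INR M * exp (1/2) * ee mu i y * SS M mu x).
   { apply Rmult_le_compat_l; [|lra]. apply Rmult_le_pos; [|lra]. apply Rmult_le_pos; lra. }
   replace (ee mu i x * SS M mu y) with (SS M mu y * ee mu i x) by ring.
   replace ((INR M * exp (1/2) + 1) * ee mu i y * SS M mu x) with
    (INR M * exp (1/2) * ee mu i y * SS M mu x + SS M mu x * ee mu i y) by ring. lra. }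
 unfold Rdiv. apply Rmult_le_reg_r with (SS M mu y * SS M mu x). nra.
 replace (ee mu i x * / SS M mu x * (SS M mu y * SS M mu x)) with (ee mu i x * SS M mu y) by (field; repeat split; lra).
 replace ((INR M * exp (1 * / 2) + 1) * (ee mu i y * / SS M mu y) * (SS M mu y * SS M mu x)) with
  ((INR M * exp (1 * / 2) + 1) * ee mu i y * SS M mu x) by (field; repeat split; lra). lra.
Qed.

Lemma ex_derive_weight M mu i x : (i < M)%nat -> ex_derive (weight M mu i) x.
Proof. intros Hi. 
 apply (ex_derive_div (ee mu i) (SS M mu)).
 - unfold ee. auto_derive. auto.
 - unfold SS. apply ex_derive_sumR. intros j. unfold ee. auto_derive. auto.
 - assert (hx:=SS_ge M mu i x Hi). assert (px := ee_pos mu i x). lra.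
Qed.


Lemma dcont (f : R -> R) x : ex_derive f x -> continuous f x.
Proof. intros H. apply (ex_derive_continuous (K:=R_AbsRing) (V:=R_NormedModule)). exact H. Qed.

Lemma exRc (f : R -> R) a b : (forall z, continuous f z) -> ex_RInt f a b.
Proof. intros H. apply (ex_RInt_continuous (V:=R_CompleteNormedModule)). intros; apply H. Qed.

Lemma RInt_ftc (F f : R -> R) a b : (forall x, is_derive F x (f x)) -> (forall x, continuous f x) ->
  RInt f a b = F b - F a.
Proof. intros H1 H2. apply is_RInt_unique. apply (is_RInt_derive F f); auto. Qed.

Lemma exp_sq_bound z : (1 + z^2/4)^2 <= exp (z^2/2).
Proof. replace (z^2/2) with (z^2/4 + z^2/4) by field. rewrite exp_plus.
 assert (h := exp_ineq1_le (z^2/4)). assert (0 <= z^2) by apply pow2_ge_0. replace ((1 + z^2/4)^2) with ((1 + z^2/4)*(1+z^2/4)) by ring.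
 apply Rmult_le_compat; lra. Qed.

Lemma sq_aux x m : 1 + x^2 <= 2*(1+m^2)*(1+(x-m)^2).
Proof. assert (0 <= (x-m-m)^2) by apply pow2_ge_0.
   assert (0 <= ((x-m)*m)^2) by apply pow2_ge_0. nra. Qed.

Lemma tail_bound x m : Rabs x * exp (- ((x - m)^2) / 2) <= 16 * (1 + m^2) / (1 + (x - m)^2).
Proof.
 assert (h := exp_sq_bound (x - m)).
 assert (hz : 0 <= (x-m)^2) by apply pow2_ge_0.
 assert (E : exp (- ((x - m)^2) / 2) = / exp ((x-m)^2/2)).
 { rewrite <- exp_Ropp. f_equal. field. }
 rewrite E. set (z := x - m) in *. set (Ez := exp (z^2/2)) in *.
 assert (0 < Ez) by apply exp_pos.
 assert (ha : Rabs x <= (1 + x^2)/2).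
 { assert (0 <= (x-1)^2) by apply pow2_ge_0. assert (0 <= (x+1)^2) by apply pow2_ge_0.
   unfold Rabs; destruct (Rcase_abs x); nra. }
 assert (hx : 1 + x^2 <= 2*(1+m^2)*(1+z^2)).
 { unfold z; apply sq_aux. }
 assert (key : Rabs x * (1 + z^2) <= 16 * (1+m^2) * Ez).
 { assert (0 <= Rabs x) by apply Rabs_pos.
   apply Rle_trans with ((1+x^2)/2 * (1+z^2)). apply Rmult_le_compat_r; lra.
   apply Rle_trans with ((1+m^2)*(1+z^2)*(1+z^2)). nra.
   assert (0 <= m^2) by apply pow2_ge_0.
   apply Rle_trans with (16*(1+m^2)*(1+z^2/4)^2). nra. nra. }
 apply Rmult_le_reg_r with (Ez * (1 + z^2)). nra.
 replace (Rabs x * / Ez * (Ez * (1 + z ^ 2))) with (Rabs x * (1 + z^2)) by (field; lra).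
 replace (16 * (1 + m ^ 2) / (1 + z ^ 2) * (Ez * (1 + z ^ 2))) with (16 * (1+m^2) * Ez) by (field; lra).
 exact key.
Qed.

Lemma atan_int m p q : RInt (fun x => / (1 + (x - m)^2)) p q = atan (q - m) - atan (p - m).
Proof. apply (RInt_ftc (fun x => atan (x - m))).
 - intros x. apply is_derive_Reals.
   assert (h := derivable_pt_lim_comp (fun x => x - m) atan x 1 (/ (1 + (x-m)^2))).
   replace (/ (1 + (x - m) ^ 2)) with (/ (1 + (x-m)^2) * 1) by ring. apply h.
   + apply is_derive_Reals. auto_derive; auto; ring.
   + apply derivable_pt_lim_atan.
 - intros x. apply dcont. auto_derive. assert (0 <= (x-m)^2) by apply pow2_ge_0. lra.
Qed.

Lemma bounded_int (f : R -> R) m C p q : p <= q -> 0 <= C -> ex_RInt f p q ->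
  (forall x, Rabs (f x) <= C / (1 + (x - m)^2)) ->
  - (C * PI) <= RInt f p q <= C * PI.
Proof. intros Hpq HC Hex Hb.
 assert (Hex2 : ex_RInt (fun x => C * / (1 + (x - m)^2)) p q).
 { apply exRc. intros z. apply dcont. auto_derive.
   assert (0 <= (z-m)^2) by apply pow2_ge_0. lra. }
 assert (Hex3 : ex_RInt (fun x => - (C * / (1 + (x - m)^2))) p q).
 { apply exRc. intros z. apply dcont. auto_derive.
   assert (0 <= (z-m)^2) by apply pow2_ge_0. lra. }
 assert (I1 : RInt (fun x => C * / (1 + (x - m)^2)) p q = C * (atan (q - m) - atan (p - m))).
 { rewrite <- atan_int. apply (RInt_scal (fun x => / (1 + (x - m)^2))).
   apply exRc. intros z. apply dcont. auto_derive.
   assert (0 <= (z-m)^2) by apply pow2_ge_0. lra. }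
 assert (I2 : RInt (fun x => - (C * / (1 + (x - m)^2))) p q = - (C * (atan (q - m) - atan (p - m)))).
 { rewrite <- I1. apply (RInt_opp (fun x => C * / (1 + (x - m)^2))). auto. }
 assert (ha := atan_bound (q - m)). assert (hb := atan_bound (p - m)).
 assert (PI > 0) by apply PI_RGT_0.
 split.
 - apply Rle_trans with (RInt (fun x => - (C * / (1 + (x - m)^2))) p q).
   + rewrite I2. nra.
   + apply RInt_le; auto. intros x _. specialize (Hb x). unfold Rdiv in Hb.
     unfold Rabs in Hb; destruct (Rcase_abs (f x)); lra.
 - apply Rle_trans with (RInt (fun x => C * / (1 + (x - m)^2)) p q).
   + apply RInt_le; auto. intros x _. specialize (Hb x). unfold Rdiv in Hb.
     unfold Rabs in Hb; destruct (Rcase_abs (f x)); lra.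
   + rewrite I1. nra.
Qed.


Definition gc M mu i m x := weight M mu i x * x * exp (- ((x - m)^2) / 2).

Lemma gc_der M mu i m x : (i < M)%nat -> ex_derive (gc M mu i m) x.
Proof. intros Hi. unfold gc.
 apply (ex_derive_mult (fun x => weight M mu i x * x) (fun x => exp (- ((x - m)^2) / 2))).
 - apply (ex_derive_mult (weight M mu i) (fun x => x)). apply ex_derive_weight; auto. apply ex_derive_id.
 - auto_derive; auto.
Qed.

Lemma gc_cont M mu i m x : (i < M)%nat -> continuous (gc M mu i m) x.
Proof. intros; apply dcont, gc_der; auto. Qed.

Lemma RInt_split (f : R -> R) a b c : (forall z, continuous f z) -> RInt f a c = RInt f a b + RInt f b c.
Proof. intros H. symmetry. apply (RInt_Chasles (V:=R_CompleteNormedModule)); apply exRc; auto. Qed.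

Lemma RInt_nonneg (f : R -> R) a b : a <= b -> (forall z, continuous f z) -> (forall x, a < x < b -> 0 <= f x) -> 0 <= RInt f a b.
Proof. intros. apply RInt_ge_0; auto. apply exRc; auto. Qed.

Lemma RInt_mono (f g : R -> R) a b : a <= b -> (forall z, continuous f z) -> (forall z, continuous g z) ->
  (forall x, a < x < b -> f x <= g x) -> RInt f a b <= RInt g a b.
Proof. intros. apply RInt_le; auto; apply exRc; auto. Qed.

Lemma RInt_scal' (f : R -> R) c a b : (forall z, continuous f z) -> RInt (fun x => c * f x) a b = c * RInt f a b.
Proof. intros H. apply (RInt_scal (V:=R_CompleteNormedModule)). apply exRc; auto. Qed.

Lemma gc_nonneg M mu i m x : (i < M)%nat -> 0 <= x -> 0 <= gc M mu i m x.
Proof. intros. unfold gc. assert (h:=weight_pos M mu i x H). assert (h2 := exp_pos (- ((x - m)^2) / 2)).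
 apply Rmult_le_pos; [apply Rmult_le_pos|]; lra. Qed.

Lemma gc_nonpos M mu i m x : (i < M)%nat -> x <= 0 -> gc M mu i m x <= 0.
Proof. intros. unfold gc. assert (h:=weight_pos M mu i x H). assert (h2 := exp_pos (- ((x - m)^2) / 2)).
 assert (0 <= weight M mu i x * (- x) * exp (- ((x - m)^2) / 2)) by (apply Rmult_le_pos; [apply Rmult_le_pos|]; lra).
 lra. Qed.

Ltac contc := intros ?; apply dcont; auto_derive; auto.

Lemma int_yexp m : 0 < m -> RInt (fun y => y * exp (m * y)) 0 1 = ((m - 1) * exp m + 1) / (m * m).
Proof. intros Hm. rewrite (RInt_ftc (fun y => (y / m - 1 / (m*m)) * exp (m * y))).
 - replace (m * 1) with m by ring. replace (m * 0) with 0 by ring. rewrite exp_0. change (@eq R ((1 / m - 1 / (m * m)) * exp m - (0 / m - 1 / (m * m)) * 1) (((m - 1) * exp m + 1) / (m * m))). field; lra.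
 - intros x. auto_derive; auto; field; lra.
 - contc.
Qed.

Lemma int_nxexp m A : 0 < m -> 0 <= A -> RInt (fun x => - x * exp (m * x)) (- A) 0 <= 1 / (m * m).
Proof. intros Hm HA. rewrite (RInt_ftc (fun x => - (x / m - 1 / (m*m)) * exp (m * x))).
 - replace (m * 0) with 0 by ring. rewrite exp_0.
   assert (0 < exp (m * - A)) by apply exp_pos.
   assert (0 <= (A / m + 1/(m*m))) by (apply Rplus_le_le_0_compat; [apply Rmult_le_pos|]; try apply Rlt_le, Rinv_0_lt_compat; unfold Rdiv; try nra;
     apply Rmult_le_pos; try lra; apply Rlt_le, Rinv_0_lt_compat; nra).
   replace (- (- A / m - 1 / (m * m)) * exp (m * - A)) with ((A / m + 1/(m*m)) * exp (m * - A)) by (field; lra).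
   assert (0 <= (A / m + 1/(m*m)) * exp (m * - A)) by (apply Rmult_le_pos; lra).
   replace (- (0 / m - 1 / (m * m)) * 1) with (1/(m*m)) by (field; lra). lra.
 - intros x. auto_derive; auto; field; lra.
 - contc.
Qed.


Lemma exp_M_bound M m : (0 < M)%nat -> ln (INR M) + 3 < m -> INR M * exp 3 <= exp m.
Proof. intros HM Hm. assert (0 < INR M) by (apply lt_0_INR; auto).
 rewrite <- (exp_ln (INR M)) at 1 by auto. rewrite <- exp_plus. apply exp_le_exp. lra. Qed.

Lemma pos_comp M mu i m A B : (i < M)%nat -> 0 <= mu i -> 3 < m -> ln (INR M) + 3 < m -> 0 <= A -> 1 <= B ->
  1/2 * RInt (gc M mu i m) 0 B <= RInt (gc M mu i m) (-A) B.
Proof.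
 intros Hi Hu Hm3 HmM HA HB.
 assert (HM : (0 < M)%nat) by lia.
 assert (HMr : 1 <= INR M) by (apply (le_INR 1); lia).
 set (phi := fun y => exp (- ((y - m)^2) / 2)).
 set (K := INR M * exp (1/2) + 1).
 set (P' := RInt (gc M mu i m) 0 1).
 set (Q := RInt (fun y => y * phi y) 0 1).
 set (N := RInt (fun x => - x * phi x) (-A) 0).
 assert (cg : forall z, continuous (gc M mu i m) z) by (intros; apply gc_cont; auto).
 assert (Hm0 : 0 < m) by lra.
 assert (Qlb : exp (-1/2) * exp (- m^2/2) * (((m - 1) * exp m + 1) / (m * m)) <= Q).
 { rewrite <- int_yexp by auto. rewrite <- RInt_scal' by contc.
   unfold Q, phi. apply RInt_mono; try lra; try contc.
   intros y Hy. rewrite <- !exp_plus.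
   replace (exp (-1/2 + - m^2/2) * (y * exp (m * y))) with (y * exp (-1/2 + - m^2/2 + m * y))
     by (rewrite exp_plus; ring).
   apply Rmult_le_compat_l; [lra|]. apply exp_le_exp. nra. }
 assert (Nub : N <= exp (- m^2/2) * (1 / (m * m))).
 { apply Rle_trans with (exp (- m^2/2) * RInt (fun x => - x * exp (m * x)) (-A) 0).
   - rewrite <- RInt_scal' by contc. unfold N, phi. apply RInt_mono; try lra; try contc.
     intros x Hx. replace (exp (- m^2/2) * (- x * exp (m * x))) with (-x * exp (- m^2/2 + m * x))
       by (rewrite exp_plus; ring).
     apply Rmult_le_compat_l; [lra|]. apply exp_le_exp. nra.
   - apply Rmult_le_compat_l. left; apply exp_pos. apply int_nxexp; auto. }
 assert (Npos : 0 <= N).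
 { unfold N, phi. apply RInt_nonneg; try lra; try contc. intros x Hx. unfold phi.
   assert (0 < exp (- ((x - m)^2) / 2)) by apply exp_pos. nra. }
 assert (e1 : exp (1/2) * exp (1/2) = exp 1) by (rewrite <- exp_plus; f_equal; field).
 assert (e3 : exp 1 * exp 2 = exp 3) by (rewrite <- exp_plus; f_equal; field).
 assert (e2 : 3 <= exp 2) by (assert (h := exp_ineq1_le 2); lra).
 assert (eh : 1 <= exp (1/2)) by (assert (h := exp_ineq1_le (1/2)); lra).
 assert (em : exp (-1/2) * exp (1/2) = 1) by (rewrite <- exp_plus; replace (-1/2 + 1/2) with 0 by field; apply exp_0).
 assert (Em := exp_M_bound M m HM HmM).
 assert (Qpos : 0 < Q).
 { eapply Rlt_le_trans; [|exact Qlb]. apply Rmult_lt_0_compat. apply Rmult_lt_0_compat; apply exp_pos.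
   apply Rdiv_lt_0_compat; [|nra]. assert (0 < exp m) by apply exp_pos. nra. }
 assert (KNQ : 2 * K * N <= Q).
 { apply Rle_trans with (2 * K * (exp (- m^2/2) * (1 / (m * m)))).
   - apply Rmult_le_compat_l; auto. unfold K. assert (0 < exp (1/2)) by apply exp_pos. nra.
   - eapply Rle_trans; [|exact Qlb].
     assert (0 < exp (- m^2/2)) by apply exp_pos. assert (0 < exp (-1/2)) by apply exp_pos.
     assert (0 < exp m) by apply exp_pos.
     assert (key : 2 * K <= exp (-1/2) * ((m - 1) * exp m + 1)).
     { apply Rmult_le_reg_l with (exp (1/2)). apply exp_pos.
       replace (exp (1/2) * (exp (-1/2) * ((m - 1) * exp m + 1))) with ((m-1) * exp m + 1)
         by (transitivity ((exp (-1/2) * exp (1/2)) * ((m - 1) * exp m + 1)); [rewrite em; field | field]).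
       unfold K. assert (0 < exp 1) by apply exp_pos.
       assert (exp (1/2) <= exp 1) by nra.
       assert (h1 : exp (1/2) * (2 * (INR M * exp (1 / 2) + 1)) = 2 * INR M * exp 1 + 2 * exp (1/2)) by (rewrite <- e1; ring).
       rewrite h1.
       assert (h2 : 3 * (INR M * exp 1) <= exp m).
       { eapply Rle_trans; [|exact Em]. rewrite <- e3.
         replace (INR M * (exp 1 * exp 2)) with (exp 2 * (INR M * exp 1)) by ring.
         apply Rmult_le_compat_r; [nra|lra]. }
       assert (h3 : exp 1 <= INR M * exp 1) by nra.
       nra. }
     unfold Rdiv in key |- *. 
     assert (0 < / (m * m)) by (apply Rinv_0_lt_compat; nra).
     match goal with |- _ * (?e2 * _) <= ?e1 * ?e3 * (?X * _) =>
       apply Rle_trans with ((e1 * X) * (e2 * / (m*m))); [|right; ring] end.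
     replace (2 * K * (exp (- m ^ 2 * / 2) * (1 * / (m * m)))) with (2 * K * (exp (- m ^ 2 * / 2) * / (m * m))) by ring.
     apply Rmult_le_compat_r; [|exact key]. nra. }
 assert (Hw : forall x, -A <= x <= 0 -> weight M mu i x * Q <= K * P').
 { intros x Hx. unfold Q, P', phi. rewrite <- (RInt_scal' (gc M mu i m) K 0 1 cg). rewrite <- RInt_scal' by contc.
   apply RInt_mono; try lra; try contc.
   - apply gc_der; auto.
   - intros y Hy. unfold gc, phi.
     assert (h := weight_cmp M mu i x y Hi ltac:(lra) ltac:(lra) Hu).
     assert (0 < exp (- ((y - m)^2) / 2)) by apply exp_pos.
     assert (0 < weight M mu i x) by (apply weight_pos; auto).
     assert (0 <= y * exp (- ((y - m)^2) / 2)) by nra. fold K in h. nra. }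
 assert (P'pos : 0 <= P') by (unfold P'; apply RInt_nonneg; try lra; auto; intros; apply gc_nonneg; auto; lra).
 assert (Hneg : - (K * P' / Q) * N <= RInt (gc M mu i m) (-A) 0).
 { unfold N, phi. rewrite <- RInt_scal' by contc. apply RInt_mono; try lra; try (intros; apply gc_cont; auto); try contc.
   intros x Hx. unfold gc, phi.
   assert (h := Hw x ltac:(lra)).
   assert (hw : weight M mu i x <= K * P' / Q).
   { apply Rmult_le_reg_r with Q; auto. unfold Rdiv. rewrite Rmult_assoc, Rinv_l; lra. }
   assert (0 < exp (- ((x - m)^2) / 2)) by apply exp_pos.
   assert (0 <= - x * exp (- ((x - m)^2) / 2)) by nra. nra. }
 assert (Hneg2 : - (P' / 2) <= RInt (gc M mu i m) (-A) 0).
 { eapply Rle_trans; [|exact Hneg].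
   assert (K * P' / Q * N <= P' / 2).
   { unfold Rdiv. apply Rmult_le_reg_r with Q; auto.
     replace (K * P' * / Q * N * Q) with (K * N * P') by (field; lra).
     assert (0 < K) by (unfold K; assert (0 < exp (1/2)) by apply exp_pos; nra).
     nra. }
   lra. }
 rewrite (RInt_split _ (-A) 0 B) by auto. rewrite (RInt_split _ 0 1 B) by auto.
 fold P'.
 assert (0 <= RInt (gc M mu i m) 1 B) by (apply RInt_nonneg; try lra; auto; intros; apply gc_nonneg; auto; lra).
 lra.
Qed.


Lemma int_const C p q : RInt (fun _ => C) p q <= C * (q - p) /\ C * (q - p) <= RInt (fun _ => C) p q.
Proof. rewrite (RInt_ftc (fun x => C * x)). split; right; ring.
 intros x; auto_derive; auto; ring. intros; apply continuous_const. Qed.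

Lemma j0_comp M mu i m a : (i < M)%nat -> 0 <= mu i <= 4 * a -> a < m < 3 * a -> 3 < a ->
  / INR M * exp (-1/4 - 9 * a^2 / 4) <= RInt (gc M mu i m) 0 (4 * a).
Proof. intros Hi Hu Hm Ha.
 assert (HMr : 1 <= INR M) by (apply (le_INR 1); lia).
 set (c := (mu i + m) / 2).
 set (C := / INR M * exp (-1/4 - 9 * a^2 / 4)).
 assert (cg : forall z, continuous (gc M mu i m) z) by (intros; apply gc_cont; auto).
 rewrite (RInt_split _ 0 (c - 1/2) (4*a)) by auto. rewrite (RInt_split _ (c - 1/2) (c+1/2) (4*a)) by auto.
 assert (0 <= RInt (gc M mu i m) 0 (c - 1/2)) by (apply RInt_nonneg; auto; [unfold c; lra| intros; apply gc_nonneg; auto; unfold c in *; lra]).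
 assert (0 <= RInt (gc M mu i m) (c + 1/2) (4 * a)) by (apply RInt_nonneg; auto; [unfold c; lra| intros; apply gc_nonneg; auto; unfold c in *; lra]).
 assert (C <= RInt (gc M mu i m) (c - 1/2) (c + 1/2)).
 { destruct (int_const C (c - 1/2) (c + 1/2)) as [_ h]. replace (C * (c + 1/2 - (c - 1/2))) with C in h by field.
   eapply Rle_trans; [exact h|]. apply RInt_mono; auto. lra. intros; apply continuous_const.
   intros y Hy. unfold gc, C.
   assert (hw := weight_ge M mu i y Hi). unfold ee in hw.
   assert (hy : 1 <= y) by (unfold c in Hy; lra).
   assert (0 < exp (- (y - m) ^ 2 / 2)) by apply exp_pos.
   assert (0 < exp (- (y - mu i) ^ 2 / 2)) by apply exp_pos.
   assert (0 < / INR M) by (apply Rinv_0_lt_compat; lra).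
   apply Rle_trans with (exp (- (y - mu i) ^ 2 / 2) / INR M * 1 * exp (- (y - m) ^ 2 / 2)).
   - replace (exp (- (y - mu i) ^ 2 / 2) / INR M * 1 * exp (- (y - m) ^ 2 / 2)) with
      (/ INR M * (exp (- (y - mu i) ^ 2 / 2) * exp (- (y - m) ^ 2 / 2))) by (field; lra).
     apply Rmult_le_compat_l; [lra|]. rewrite <- exp_plus. apply exp_le_exp.
     assert (E : (y - mu i)^2 + (y - m)^2 = 2 * (y - c)^2 + (mu i - m)^2 / 2) by (unfold c; field).
     assert ((y - c)^2 <= 1/4) by nra.
     assert ((mu i - m)^2 <= 9 * a^2) by nra.
     lra.
   - apply Rmult_le_compat_r; [lra|]. apply Rmult_le_compat; try lra.
     apply Rlt_le, Rdiv_lt_0_compat; lra. }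
 fold C. lra.
Qed.

Lemma abs_le_inv a b : Rabs a <= b -> -b <= a <= b.
Proof. unfold Rabs; destruct (Rcase_abs a); lra. Qed.
Lemma c1 x mp n : x <= 0 -> 30 <= n -> Rabs (mp + n) <= n/6 -> 0 <= ((x-mp)^2 - x^2)/2 ->
  - x/5 - (x+n)^2/2 <= -7/100*n^2.
Proof. intros. apply abs_le_inv in H1. 
 assert (x + n >= 5*n/12) by nra. nra. Qed.
Lemma c2 x mp n : x <= 0 -> 30 <= n -> Rabs (mp + n) <= n/6 -> ((x-mp)^2 - x^2)/2 <= 0 ->
  ((x-mp)^2 - x^2)/2 - x/5 - (x+n)^2/2 <= -7/100*n^2.
Proof. intros. apply abs_le_inv in H1.
 assert (E: ((x-mp)^2 - x^2)/2 - x/5 - (x+n)^2/2 =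
   (n-(mp+n))*(2*(x+n)-(mp+n)-n)/2 + (n-(x+n))/5 - (x+n)^2/2) by field.
 rewrite E. clear E. 
 remember (x+n) as t. remember (mp+n) as d.
 assert (Ht: t <= (n+d)/2). { subst. nra. }
 remember ((n+d)/2 - t) as s.
 replace t with ((n+d)/2 - s) by lra.
 assert (0 <= s) by lra.
 nra. Qed.

Lemma exp_div a b : exp a / exp b = exp (a - b).
Proof. unfold Rdiv, Rminus. rewrite exp_plus, exp_Ropp. reflexivity. Qed.

Lemma neg_point M mu i j n x : (i < M)%nat -> (j < M)%nat -> 0 <= mu i -> 30 <= n ->
  Rabs (mu j + n) <= n / 6 -> x <= 0 ->
  - (10 * exp (- 7 / 100 * n ^ 2)) * exp (x / 10) <= gc M mu i (- n) x.
Proof. intros Hi Hj Hu Hn Hd Hx.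
 unfold gc. set (w := weight M mu i x).
 assert (hw1 : w <= 1) by (apply weight_le1; auto).
 assert (hw0 : 0 < w) by (apply weight_pos; auto).
 assert (hr : w <= exp (((x - mu j)^2 - x^2)/2)).
 { eapply Rle_trans. apply (weight_le_ratio M mu i j x Hi Hj). unfold ee.
   rewrite exp_div. apply exp_le_exp. nra. }
 assert (hE : exists E, w <= exp E /\ E - x/5 - (x+n)^2/2 <= -7/100*n^2).
 { destruct (Rle_dec (((x - mu j)^2 - x^2)/2) 0).
   - exists (((x - mu j)^2 - x^2)/2). split; auto. apply c2; auto.
   - exists 0. rewrite exp_0. split; auto. assert (h := c1 x (mu j) n Hx Hn Hd ltac:(lra)). lra. }
 destruct hE as [E [hwE hEb]].
 assert (hx : - x <= 10 * exp (- x / 10)).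
 { assert (h := exp_ineq1_le (- x / 10)). assert (0 < exp (- x / 10)) by apply exp_pos. lra. }
 assert (0 < exp (- (x - - n) ^ 2 / 2)) by apply exp_pos.
 assert (key : w * (- x) * exp (- (x - - n) ^ 2 / 2) <= 10 * exp (- 7 / 100 * n ^ 2) * exp (x / 10)).
 { apply Rle_trans with (exp E * (10 * exp (- x / 10)) * exp (- (x - - n) ^ 2 / 2)).
   - apply Rmult_le_compat_r; [lra|]. apply Rmult_le_compat; lra.
   - replace (exp E * (10 * exp (- x / 10)) * exp (- (x - - n) ^ 2 / 2)) with
       (10 * exp (E + - x / 10 + - (x - - n) ^ 2 / 2)) by (rewrite !exp_plus; ring).
     replace (10 * exp (- 7 / 100 * n ^ 2) * exp (x / 10)) with (10 * exp (- 7 / 100 * n ^ 2 + x / 10)) by (rewrite exp_plus; ring).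
     apply Rmult_le_compat_l; [lra|]. apply exp_le_exp.
     replace ((x - - n)^2) with ((x+n)^2) by ring. lra. }
 lra.
Qed.

Lemma int_exp10 A : 0 <= A -> RInt (fun x => exp (x / 10)) (- A) 0 <= 10.
Proof. intros HA. rewrite (RInt_ftc (fun x => 10 * exp (x / 10))).
 - replace (0/10) with 0 by field. rewrite exp_0. assert (0 < exp (- A / 10)) by apply exp_pos. lra.
 - intros x; auto_derive; auto; unfold Rdiv; field.
 - contc.
Qed.

Lemma neg_comp M mu i j n A B : (i < M)%nat -> (j < M)%nat -> 0 <= mu i -> 30 <= n ->
  Rabs (mu j + n) <= n / 6 -> 0 <= A -> 0 <= B ->
  - (100 * exp (- 7 / 100 * n ^ 2)) <= RInt (gc M mu i (- n)) (- A) B.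
Proof. intros Hi Hj Hu Hn Hd HA HB.
 assert (cg : forall z, continuous (gc M mu i (-n)) z) by (intros; apply gc_cont; auto).
 rewrite (RInt_split _ (-A) 0 B) by auto.
 assert (0 <= RInt (gc M mu i (-n)) 0 B) by (apply RInt_nonneg; auto; intros; apply gc_nonneg; auto; lra).
 assert (- (10 * exp (- 7 / 100 * n ^ 2)) * RInt (fun x => exp (x / 10)) (- A) 0 <= RInt (gc M mu i (-n)) (-A) 0).
 { rewrite <- RInt_scal' by contc. apply RInt_mono; try lra; auto; try contc.
   intros x Hx. apply (neg_point M mu i j n x); auto; lra. }
 assert (h := int_exp10 A HA). assert (0 < exp (- 7 / 100 * n ^ 2)) by apply exp_pos.
 assert (0 <= RInt (fun x => exp (x / 10)) (- A) 0).
 { apply RInt_nonneg; try lra; try contc. intros; left; apply exp_pos. }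
 nra.
Qed.


Definition gg M mu mustar i x := weight M mu i x * x * mixture_density M mustar x.
Definition Cst M := / (INR M * sqrt (2 * PI)).

Lemma Cst_pos M : (0 < M)%nat -> 0 < Cst M.
Proof. intros. unfold Cst. apply Rinv_0_lt_compat. apply Rmult_lt_0_compat.
 apply lt_0_INR; auto. apply sqrt_lt_R0. assert (h := PI_RGT_0). lra. Qed.

Lemma gg_eq M mu mustar i x : (0 < M)%nat ->
  gg M mu mustar i x = Cst M * sumR M (fun j => gc M mu i (mustar j) x).
Proof. intros HM. unfold gg, mixture_density, gc, Cst, gauss.
 assert (0 < INR M) by (apply lt_0_INR; auto).
 assert (0 < sqrt (2 * PI)) by (apply sqrt_lt_R0; assert (h := PI_RGT_0); lra).
 rewrite (sumR_ext M (fun j => exp (- (x - mustar j) ^ 2 / 2) / sqrt (2 * PI))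
    (fun j => / sqrt (2 * PI) * exp (- (x - mustar j) ^ 2 / 2))) by (intros; unfold Rdiv; ring).
 rewrite sumR_scal.
 rewrite sumR_scal. field. lra.
Qed.

Lemma gg_der M mu mustar i x : (i < M)%nat -> ex_derive (gg M mu mustar i) x.
Proof. intros Hi. unfold gg.
 apply (ex_derive_mult (fun x => weight M mu i x * x) (mixture_density M mustar)).
 - apply (ex_derive_mult (weight M mu i) (fun x => x)). apply ex_derive_weight; auto. apply ex_derive_id.
 - unfold mixture_density.
   apply (ex_derive_mult (fun _ => / INR M) (fun x => sumR M (fun j => gauss (x - mustar j)))).
   apply ex_derive_const. apply ex_derive_sumR. intros j. unfold gauss. auto_derive; auto.
Qed.

Lemma gg_cont M mu mustar i x : (i < M)%nat -> continuous (gg M mu mustar i) x.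
Proof. intros; apply dcont, gg_der; auto. Qed.

Lemma mix_nonneg M mustar x : 0 <= mixture_density M mustar x.
Proof. unfold mixture_density. apply Rmult_le_pos.
 destruct M. simpl. rewrite Rinv_0; lra. left; apply Rinv_0_lt_compat, lt_0_INR; lia.
 apply sumR_nonneg. intros. unfold gauss. apply Rlt_le, Rdiv_lt_0_compat. apply exp_pos.
 apply sqrt_lt_R0. assert (h := PI_RGT_0); lra. Qed.

Lemma gg_nonneg M mu mustar i x : (i < M)%nat -> 0 <= x -> 0 <= gg M mu mustar i x.
Proof. intros. unfold gg. assert (h := weight_pos M mu i x H). assert (h2 := mix_nonneg M mustar x).
 apply Rmult_le_pos; [apply Rmult_le_pos|]; lra. Qed.

Lemma gg_nonpos M mu mustar i x : (i < M)%nat -> x <= 0 -> gg M mu mustar i x <= 0.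
Proof. intros. unfold gg. assert (h := weight_pos M mu i x H). assert (h2 := mix_nonneg M mustar x).
 assert (0 <= weight M mu i x * (-x) * mixture_density M mustar x) by (apply Rmult_le_pos; [apply Rmult_le_pos|]; lra).
 lra. Qed.

Lemma RInt_gg M mu mustar i a b : (i < M)%nat ->
  RInt (gg M mu mustar i) a b = Cst M * sumR M (fun j => RInt (gc M mu i (mustar j)) a b).
Proof. intros Hi. assert (HM : (0 < M)%nat) by lia.
 rewrite (RInt_ext (V:=R_CompleteNormedModule) _ (fun x => Cst M * sumR M (fun j => gc M mu i (mustar j) x))).
 2:{ intros; apply gg_eq; auto. }
 destruct (ex_RInt_sumR M (fun j => gc M mu i (mustar j)) a b) as [h1 h2].
 { intros j; apply exRc; intros; apply gc_cont; auto. }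
 rewrite <- h2. apply (RInt_scal (V:=R_CompleteNormedModule)). exact h1.
Qed.

Lemma gc_abs M mu i m x : (i < M)%nat -> Rabs (gc M mu i m x) <= 16 * (1 + m^2) / (1 + (x - m)^2).
Proof. intros Hi. eapply Rle_trans; [|apply tail_bound]. unfold gc.
 assert (h := weight_pos M mu i x Hi). assert (h1 := weight_le1 M mu i x Hi).
 assert (0 < exp (- (x - m) ^ 2 / 2)) by apply exp_pos.
 rewrite !Rabs_mult. rewrite (Rabs_pos_eq (weight _ _ _ _)) by lra. rewrite (Rabs_pos_eq (exp _)) by lra.
 assert (0 <= Rabs x) by apply Rabs_pos.
 assert (0 <= Rabs x * exp (- (x - m) ^ 2 / 2)) by (apply Rmult_le_pos; lra).
 rewrite Rmult_assoc. nra. Qed.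

Definition UU M mustar := Cst M * sumR M (fun j => 16 * (1 + mustar j ^ 2) * PI).

Lemma gg_bound M mu mustar i p q : (i < M)%nat -> p <= q ->
  - UU M mustar <= RInt (gg M mu mustar i) p q <= UU M mustar.
Proof. intros Hi Hpq. assert (HM : (0 < M)%nat) by lia. rewrite RInt_gg by auto. unfold UU.
 assert (hc := Cst_pos M HM).
 assert (hb : forall j, - (16 * (1 + mustar j ^ 2) * PI) <= RInt (gc M mu i (mustar j)) p q <= 16 * (1 + mustar j ^ 2) * PI).
 { intros j. apply bounded_int with (mustar j); auto.
   assert (0 <= mustar j ^2) by apply pow2_ge_0. lra.
   apply exRc; intros; apply gc_cont; auto. intros; apply gc_abs; auto. }
 split.
 - apply Rle_trans with (Cst M * sumR M (fun j => -1 * (16 * (1 + mustar j ^ 2) * PI))).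
   + right. rewrite sumR_scal. ring.
   + apply Rmult_le_compat_l; [lra|]. apply sumR_le. intros j _. destruct (hb j); lra.
 - apply Rmult_le_compat_l; [lra|]. apply sumR_le. intros j _. destruct (hb j); lra.
Qed.


Lemma sumR_addc n f c : sumR n (fun j => f j + c) = sumR n f + INR n * c.
Proof. induction n; simpl sumR; [simpl; ring|]. rewrite IHn, S_INR; ring. Qed.

Lemma core M a mustar mu i A :
  a > ln (INR M) + 3 ->
  (forall j : nat, (j < M)%nat -> mustar j < -10 * a \/ a < mustar j) ->
  (exists j : nat, (j < M)%nat /\ a < mustar j /\ mustar j < 3 * a) ->
  (forall j : nat, (j < M)%nat -> mustar j < -10 * a ->
            exists j' : nat, (j' < M)%nat /\ Rabs (mu j' - mustar j) <= Rabs (mustar j) / 6) ->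
  (i < M)%nat -> 0 <= mu i <= 4 * a -> 0 <= A ->
  0 <= RInt (gg M mu mustar i) (- A) (4 * a).
Proof.
 intros ha hsep [j0 [Hj0 [Hj0a Hj0b]]] hcov Hi Hu HA.
 assert (HM : (0 < M)%nat) by lia.
 assert (HMr : 1 <= INR M) by (apply (le_INR 1); lia).
 assert (Hln : 0 <= ln (INR M)) by (rewrite <- ln_1; apply ln_le; lra).
 assert (Ha3 : 3 < a) by lra.
 rewrite RInt_gg by auto.
 apply Rmult_le_pos; [left; apply Cst_pos; auto|].
 set (Ev := 100 * exp (-7 * a^2)).
 set (D := fun j => RInt (gc M mu i (mustar j)) (- A) (4 * a)).
 change (0 <= sumR M D).
 assert (hEv : 0 < Ev) by (unfold Ev; assert (0 < exp (-7 * a^2)) by apply exp_pos; lra).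
 assert (Hall : forall j, (j < M)%nat -> 0 <= D j + Ev).
 { intros j Hj. destruct (hsep j Hj) as [Hn | Hp].
   - destruct (hcov j Hj Hn) as [j' [Hj' Hd]].
     set (n := - mustar j).
     assert (Hn30 : 30 <= n) by (unfold n; lra).
     assert (Hd' : Rabs (mu j' + n) <= n / 6).
     { unfold n. replace (mu j' + - mustar j) with (mu j' - mustar j) by ring.
       rewrite (Rabs_left1 (mustar j)) in Hd by lra. lra. }
     assert (h := neg_comp M mu i j' n A (4 * a) Hi Hj' ltac:(lra) Hn30 Hd' HA ltac:(lra)).
     assert (exp (- 7 / 100 * n ^ 2) <= exp (-7 * a^2)).
     { apply exp_le_exp. assert (10 * a <= n) by (unfold n; lra). assert (100 * a^2 <= n^2) by nra. lra. }
     unfold n in *. rewrite Ropp_involutive in h. unfold D, Ev. lra.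
   - assert (h := pos_comp M mu i (mustar j) A (4 * a) Hi ltac:(lra) ltac:(lra) ltac:(lra) HA ltac:(lra)).
     assert (0 <= RInt (gc M mu i (mustar j)) 0 (4 * a)).
     { apply RInt_nonneg; try lra. intros; apply gc_cont; auto. intros; apply gc_nonneg; auto; lra. }
     unfold D. lra. }
 assert (Hj0D : / 2 * (/ INR M * exp (-1/4 - 9 * a^2 / 4)) <= D j0).
 { assert (h := pos_comp M mu i (mustar j0) A (4 * a) Hi ltac:(lra) ltac:(lra) ltac:(lra) HA ltac:(lra)).
   assert (h2 := j0_comp M mu i (mustar j0) a Hi Hu ltac:(lra) Ha3).
   unfold D. lra. }
 assert (Hsum : D j0 + Ev <= sumR M (fun j => D j + Ev)).
 { apply (sumR_ge_term M (fun j => D j + Ev)); auto. }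
 rewrite sumR_addc in Hsum.
 set (Lm := ln (INR M)).
 assert (HMe : INR M = exp Lm) by (unfold Lm; rewrite exp_ln; lra).
 assert (e8 : 200 <= exp 8).
 { assert (h := exp_ineq1_le 1).
   assert (exp 2 = exp 1 * exp 1) by (rewrite <- exp_plus; f_equal; ring).
   assert (exp 4 = exp 2 * exp 2) by (rewrite <- exp_plus; f_equal; ring).
   assert (exp 8 = exp 4 * exp 4) by (rewrite <- exp_plus; f_equal; ring).
   assert (4 <= exp 2) by nra. assert (16 <= exp 4) by nra. nra. }
 assert (num : 200 * INR M * INR M * exp (-7 * a^2) <= exp (-1/4 - 9 * a^2 / 4)).
 { apply Rle_trans with (exp 8 * exp Lm * exp Lm * exp (-7 * a^2)).
   - rewrite HMe. assert (0 < exp Lm) by apply exp_pos. assert (0 < exp (-7 * a^2)) by apply exp_pos.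
     apply Rmult_le_compat_r; [lra|]. nra.
   - rewrite <- !exp_plus. apply exp_le_exp. unfold Lm. nra. }
 assert (0 < / INR M) by (apply Rinv_0_lt_compat; lra).
 assert (fin : INR M * Ev <= / 2 * (/ INR M * exp (-1/4 - 9 * a^2 / 4))).
 { unfold Ev. apply Rmult_le_reg_l with (2 * INR M). lra.
   replace (2 * INR M * (/ 2 * (/ INR M * exp (-1 / 4 - 9 * a ^ 2 / 4)))) with (exp (-1 / 4 - 9 * a ^ 2 / 4)) by (field; lra).
   lra. }
 lra.
Qed.


Theorem lemma4 (M : nat) (a : R) (mustar mu : nat -> R)
  (ha : a > ln (INR M) + 3)
  (hsep : forall j : nat, (j < M)%nat -> mustar j < -10 * a \/ a < mustar j)
  (hone : exists j : nat, (j < M)%nat /\ a < mustar j /\ mustar j < 3 * a)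
  (hcov : forall j : nat, (j < M)%nat -> mustar j < -10 * a ->
            exists j' : nat, (j' < M)%nat /\
              Rabs (mu j' - mustar j) <= Rabs (mustar j) / 6) :
  forall i : nat, (i < M)%nat -> 0 <= mu i <= 4 * a ->
    exists L : R,
      mixture_expectation_is M mustar (fun x => weight M mu i x * x) L /\ 0 <= L.
Proof.
 intros i Hi Hu.
 assert (HM : (0 < M)%nat) by lia.
 assert (HMr : 1 <= INR M) by (apply (le_INR 1); lia).
 assert (Hln : 0 <= ln (INR M)) by (rewrite <- ln_1; apply ln_le; lra).
 set (g := gg M mu mustar i).
 assert (cg : forall z, continuous g z) by (intros; apply gg_cont; auto).
 set (U := UU M mustar).
 set (Ep := fun v => exists b, 0 <= b /\ v = RInt g 0 b).
 set (En := fun v => exists c, c <= 0 /\ v = - RInt g c 0).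
 assert (bEp : bound Ep).
 { exists U. intros v [b [Hb ->]]. destruct (gg_bound M mu mustar i 0 b Hi Hb) as [h1 h2]. fold g U in h1, h2. lra. }
 assert (bEn : bound En).
 { exists U. intros v [c [Hc ->]]. destruct (gg_bound M mu mustar i c 0 Hi Hc) as [h1 h2]. fold g U in h1, h2. lra. }
 assert (iEp : exists x, Ep x) by (exists (RInt g 0 0); exists 0; split; [lra|auto]).
 assert (iEn : exists x, En x) by (exists (- RInt g 0 0); exists 0; split; [lra|auto]).
 destruct (completeness Ep bEp iEp) as [Lp [HLp1 HLp2]].
 destruct (completeness En bEn iEn) as [Ln [HLn1 HLn2]].
 assert (mono_p : forall b b', 0 <= b <= b' -> RInt g 0 b <= RInt g 0 b').
 { intros b b' Hb. rewrite (RInt_split g 0 b b') by auto.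
   assert (0 <= RInt g b b') by (apply RInt_nonneg; auto; try lra; intros; apply gg_nonneg; auto; lra). lra. }
 assert (mono_n : forall c c', c' <= c <= 0 -> - RInt g c 0 <= - RInt g c' 0).
 { intros c c' Hc. rewrite (RInt_split g c' c 0) by auto.
   assert (0 <= RInt (fun x => - g x) c' c).
   { apply RInt_nonneg; try lra. intros; apply dcont; apply (ex_derive_opp g); apply gg_der; auto. intros; assert (g x <= 0) by (apply gg_nonpos; auto; lra). lra. }
   assert (RInt (fun x => - g x) c' c = - RInt g c' c).
   { apply (RInt_opp (V:=R_CompleteNormedModule)). apply exRc; auto. }
   lra. }
 exists (Lp - Ln). split.
 - intros eps Heps.
   assert (exb : exists b0, 0 <= b0 /\ Lp - eps/2 < RInt g 0 b0).
   { apply NNPP. intros Hn. assert (Lp <= Lp - eps/2); [|lra].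
     apply HLp2. intros v [b [Hb ->]]. apply Rnot_lt_le. intros Hlt. apply Hn. exists b; auto. }
   assert (exc : exists c0, c0 <= 0 /\ Ln - eps/2 < - RInt g c0 0).
   { apply NNPP. intros Hn. assert (Ln <= Ln - eps/2); [|lra].
     apply HLn2. intros v [c [Hc ->]]. apply Rnot_lt_le. intros Hlt. apply Hn. exists c; auto. }
   destruct exb as [b0 [Hb0 Hb0']]. destruct exc as [c0 [Hc0 Hc0']].
   exists (Rmax b0 (- c0)). intros p q Hp Hq.
   assert (h1 := Rmax_l b0 (- c0)). assert (h2 := Rmax_r b0 (- c0)).
   assert (Hex : ex_RInt (fun x => weight M mu i x * x * mixture_density M mustar x) p q).
   { apply exRc. intros; apply gg_cont; auto. }
   exists (ex_RInt_Reals_0 _ _ _ Hex).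
   rewrite <- RInt_Reals. change (Rabs (RInt g p q - (Lp - Ln)) < eps).
   rewrite (RInt_split g p 0 q) by auto.
   assert (A1 : RInt g 0 q <= Lp) by (apply HLp1; exists q; split; auto; lra).
   assert (A2 : - RInt g p 0 <= Ln) by (apply HLn1; exists p; split; auto; lra).
   assert (A3 : RInt g 0 b0 <= RInt g 0 q) by (apply mono_p; lra).
   assert (A4 : - RInt g c0 0 <= - RInt g p 0) by (apply mono_n; lra).
   unfold Rabs; destruct (Rcase_abs _); lra.
 - assert (Ln <= Lp).
   { apply HLn2. intros v [c [Hc ->]].
     assert (h := core M a mustar mu i (- c) ha hsep hone hcov Hi Hu ltac:(lra)).
     rewrite Ropp_involutive in h. fold g in h.
     rewrite (RInt_split g c 0 (4 * a)) in h by auto.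
     assert (RInt g 0 (4 * a) <= Lp) by (apply HLp1; exists (4 * a); split; auto; lra).
     lra. }
   lra.
Qed.
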